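(* Let $\mathbb{Y}$ and $\mathbb{T}$ be sets and let $\underline{\mathsf{P}}_{Y,\Theta}$ be a coherent lower prevision on the linear space $\mathfrak{F}$ of bounded real-valued functions (gambles) on $\mathbb{Y}\times\mathbb{T}$. Suppose $\underline{\mathsf{P}}_{Y,\Theta}$ is $\mathscr{B}$-conglomerable, where $\mathscr{B}=\{B_y=\{y\}\times\mathbb{T}: y\in\mathbb{Y}\}$. Let $\{\underline{\Gamma}_y: y\in\mathbb{Y}\}$ be the generalized Bayes IM (defined in the context). Let $y\mapsto(\underline{\Pi}_y,\overline{\Pi}_y)$ be an inferential model such that $\underline{\Pi}_y\le\underline{\Gamma}_y$ for every $y\in\mathbb{Y}$. Then this IM is invulnerable, i.e., for every $H\subseteq\mathbb{T}$ and every $\beta\in[0,1]$, the gamble $$f^{H,\beta}(y,\theta)=\{1(\theta\in H)-\beta\}\,1\{\underline{\Pi}_y(H)>\beta\},\qquad (y,\theta)\in\mathbb{Y}\times\mathbb{T},$$ satisfies $\underline{\mathsf{P}}_{Y,\Theta}(f^{H,\beta})\ge 0$.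
   Context: A lower prevision $\underline{\mathsf{P}}$ on a linear space $\mathfrak{F}$ of bounded gambles on a set $\Omega$ is coherent if for all integers $m,K\ge0$ and all $f_0,\dots,f_K\in\mathfrak{F}$, $\sup_{\omega}\bigl[\sum_{k=1}^K\{f_k(\omega)-\underline{\mathsf{P}}(f_k)\}-m\{f_0(\omega)-\underline{\mathsf{P}}(f_0)\}\bigr]\ge0$; its conjugate upper prevision is $\overline{\mathsf{P}}(f)=-\underline{\mathsf{P}}(-f)$, and for a set $B$ one writes $\underline{\mathsf{P}}(B)=\underline{\mathsf{P}}(1_B)$. $\underline{\mathsf{P}}_{Y,\Theta}$ is $\mathscr{B}$-conglomerable if for every gamble $f$ and every countable collection $\{B_{y_k}\}$ of distinct sets from $\mathscr{B}$, if $\underline{\mathsf{P}}_{Y,\Theta}(1_{B_{y_k}}f)>0$ for all $k$, then $\underline{\mathsf{P}}_{Y,\Theta}(1_{\bigcup_kB_{y_k}}f)\ge0$. An inferential model (IM) is a map $y\mapsto(\underline{\Pi}_y,\overline{\Pi}_y)$ assigning to each $y\in\mathbb{Y}$ a coherent lower prevision $\underline{\Pi}_y$ (with conjugate upper prevision $\overline{\Pi}_y$) on the bounded gambles $f_y(\theta)=f(y,\theta)$ on $\mathbb{T}$; for $H\subseteq\mathbb{T}$, $\underline{\Pi}_y(H)=\underline{\Pi}_y(1_H)$. The generalized Bayes IM is defined, for each $y$ and $f\in\mathfrak{F}$, by: if $\underline{\mathsf{P}}_{Y,\Theta}(\{y\}\times\mathbb{T})=0$, then $\underline{\Gamma}_y(f_y)=\inf_{\theta\in\mathbb{T}}f(y,\theta)$;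 if $\underline{\mathsf{P}}_{Y,\Theta}(\{y\}\times\mathbb{T})>0$, then $\underline{\Gamma}_y(f_y)=\min\{\mathsf{P}(f\,1_{\{y\}\times\mathbb{T}})/\mathsf{P}(1_{\{y\}\times\mathbb{T}}):\mathsf{P}\in\mathscr{C}(\underline{\mathsf{P}}_{Y,\Theta})\}$, where $\mathscr{C}(\underline{\mathsf{P}}_{Y,\Theta})$ is the set of all linear previsions (finitely additive expectations) $\mathsf{P}$ on $\mathfrak{F}$ with $\mathsf{P}\ge\underline{\mathsf{P}}_{Y,\Theta}$ pointwise. *)

(* Defs.v *)
From Stdlib Require Import Reals Lra List ClassicalEpsilon.
From Coquelicot Require Import Coquelicot.
Open Scope R_scope.

Definition is_gamble {X : Type} (f : X -> R) : Prop :=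
  exists M : R, forall x, Rabs (f x) <= M.

Definition rsum (g : nat -> R) (K : nat) : R :=
  fold_right Rplus 0 (map g (seq 1 K)).

(* Coherence of a lower prevision on the linear space of all is_gamble gambles on X
   (the lower prevision is a total function; only its values on is_gamble gambles matter).
   "sup_x [ ... ] >= 0" of a is_gamble function is written as: for every eps > 0
   some x makes the bracket exceed -eps. *)
Definition coherent_lp {X : Type} (P : (X -> R) -> R) : Prop :=
  forall (m K : nat) (fs : nat -> X -> R),
    (forall k, (k <= K)%nat -> is_gamble (fs k)) ->
    forall eps : R, 0 < eps ->
      exists x : X,
        rsum (fun k => fs k x - P (fs k)) K - INR m * (fs 0%nat x - P (fs 0%nat)) > - eps.

Definition linear_prevision {X : Type} (P : (X -> R) -> R) : Prop :=
  (forall f g, is_gamble f -> is_gamble g -> P (fun x => f x + g x) = P f + P g) /\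
  (forall (c : R) f, is_gamble f -> P (fun x => c * f x) = c * P f) /\
  (forall f, is_gamble f -> (forall x, 0 <= f x) -> 0 <= P f) /\
  P (fun _ => 1) = 1.

Definition credal {X : Type} (lowP : (X -> R) -> R) (P : (X -> R) -> R) : Prop :=
  linear_prevision P /\ (forall f, is_gamble f -> lowP f <= P f).

Definition indic {X : Type} (A : X -> Prop) (x : X) : R :=
  if excluded_middle_informative (A x) then 1 else 0.

Definition Bset {Y T : Type} (y : Y) : Y * T -> Prop := fun z => fst z = y.

Definition countable_set {Y : Type} (S : Y -> Prop) : Prop :=
  exists g : Y -> nat, forall a b, S a -> S b -> g a = g b -> a = b.

(* B-conglomerability, B = {B_y : y in Y}; a countable collection of distinct
   B_y's is indexed by a countable set S of y's; its union is S x T. *)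
Definition conglomerable {Y T : Type} (lowP : (Y * T -> R) -> R) : Prop :=
  forall f : Y * T -> R, is_gamble f ->
  forall S : Y -> Prop, countable_set S ->
    (forall y, S y -> lowP (fun z => indic (Bset y) z * f z) > 0) ->
    lowP (fun z => indic (fun z' : Y * T => S (fst z')) z * f z) >= 0.

(* Generalized Bayes IM Gamma_y(f_y) (value in Rbar; min written as infimum). *)
Definition GenBayes {Y T : Type} (lowP : (Y * T -> R) -> R) (y : Y) (f : Y * T -> R)
  : Rbar :=
  if Rlt_dec 0 (lowP (indic (@Bset Y T y))) then
    Glb_Rbar (fun r => exists P, credal lowP P /\
        r = P (fun z => f z * indic (Bset y) z) / P (indic (Bset y)))
  else Glb_Rbar (fun r => exists th : T, r = f (y, th)).

Definition fHbeta {Y T : Type} (Pi : Y -> (T -> R) -> R) (H : T -> Prop) (beta : R)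
  (z : Y * T) : R :=
  (indic H (snd z) - beta) * (if Rlt_dec beta (Pi (fst z) (indic H)) then 1 else 0).

(* Main.v *)
Require Import Defs.
From Stdlib Require Import Reals Lra Lia ZArith List ClassicalEpsilon Classical FunctionalExtensionality.
From Stdlib Require Cantor.
From Coquelicot Require Import Coquelicot.
From mathcomp Require classical_sets.
Set Bullet Behavior "Strict Subproofs".
Open Scope R_scope.

Definition bt (P : Prop) : bool := if excluded_middle_informative P then true else false.
Lemma btE (P : Prop) : is_true (bt P) <-> P.
Proof. unfold bt, is_true. destruct (excluded_middle_informative P); split; auto; discriminate. Qed.

Lemma zorn_pre (T : Type) (t0 : T) (Rl : T -> T -> Prop) :
  (forall t, Rl t t) -> (forall r s t, Rl r s -> Rl s t -> Rl r t) ->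
  (forall A : T -> Prop, (forall s t, A s -> A t -> Rl s t \/ Rl t s) ->
      exists t, forall s, A s -> Rl s t) ->
  exists t, forall s, Rl t s -> Rl s t.
Proof.
  intros Hr Ht Hc.
  destruct (@classical_sets.ZL_preorder T t0 (fun a b => bt (Rl a b))) as [t Hm].
  - intros; cbv beta; apply btE; auto.
  - intros r s t H1 H2. apply (proj1 (btE _)) in H1. apply (proj1 (btE _)) in H2. apply btE. eapply Ht; eauto.
  - intros A HA. destruct (Hc A) as [t Htt].
    + intros s t Hs Hts; destruct (HA s t Hs Hts) as [h|h]; apply (proj1 (btE _)) in h; auto.
    + exists t; intros; apply btE; auto.
  - exists t; intros s Hs. apply btE. apply Hm. apply btE. auto.
Qed.

Definition glb (E : R -> Prop) : R := real (Glb_Rbar E).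

Lemma glb_spec (E : R -> Prop) (v0 m : R) : E v0 -> (forall v, E v -> m <= v) ->
  (forall v, E v -> glb E <= v) /\ (forall eps, 0 < eps -> exists v, E v /\ v < glb E + eps)
  /\ m <= glb E.
Proof.
  intros H0 Hm. destruct (Glb_Rbar_correct E) as [Hlb Hg].
  assert (Hfin : is_finite (Glb_Rbar E)).
  { assert (h1 := Hlb v0 H0). assert (h2 : Rbar_le m (Glb_Rbar E)) by (apply Hg; intros v Hv; apply Hm; auto).
    destruct (Glb_Rbar E); simpl in *; try tauto; reflexivity. }
  unfold glb. split; [|split].
  - intros v Hv. assert (h := Hlb v Hv). rewrite <- Hfin in h. exact h.
  - intros eps He. apply NNPP; intro Hn.
    assert (h : Rbar_le (real (Glb_Rbar E) + eps) (Glb_Rbar E)).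
    { apply Hg. intros v Hv. simpl. apply Rnot_lt_le. intro hl. apply Hn. exists v; auto. }
    rewrite <- Hfin in h. simpl in h. lra.
  - assert (h2 : Rbar_le m (Glb_Rbar E)) by (apply Hg; intros v Hv; apply Hm; auto).
    rewrite <- Hfin in h2; exact h2.
Qed.

Lemma glb_char (E : R -> Prop) (g : R) : (forall v, E v -> g <= v) ->
  (forall eps, 0 < eps -> exists v, E v /\ v < g + eps) -> glb E = g.
Proof.
  intros H1 H2. destruct (H2 1 Rlt_0_1) as [v0 [Hv0 _]].
  destruct (glb_spec E v0 g Hv0 H1) as [A [B C]].
  apply Rle_antisym; auto.
  apply Rnot_lt_le; intro Hl.
  destruct (H2 (glb E - g)) as [v [Hv Hv']]; [lra|].
  specialize (A v Hv). lra.
Qed.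

Lemma le_eps (a b : R) : (forall eps, 0 < eps -> a < b + eps) -> a <= b.
Proof. intros H. apply Rnot_lt_le; intro h. specialize (H (a - b)). lra. Qed.

Ltac fext := apply functional_extensionality; intro.

Lemma gam_add {X} (f g : X -> R) : is_gamble f -> is_gamble g -> is_gamble (fun x => f x + g x).
Proof.
  intros [M1 H1] [M2 H2]. exists (M1 + M2). intros x.
  eapply Rle_trans; [apply Rabs_triang|]. specialize (H1 x); specialize (H2 x); lra.
Qed.

Lemma gam_scal {X} (c : R) (f : X -> R) : is_gamble f -> is_gamble (fun x => c * f x).
Proof.
  intros [M H]. exists (Rabs c * M). intros x. rewrite Rabs_mult.
  apply Rmult_le_compat_l; [apply Rabs_pos|auto].
Qed.

Lemma gam_opp {X} (f : X -> R) : is_gamble f -> is_gamble (fun x => - f x).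
Proof. intros [M H]. exists M. intros x. rewrite Rabs_Ropp. auto. Qed.

Lemma gam_const {X} (c : R) : is_gamble (fun _ : X => c).
Proof. exists (Rabs c). intros; lra. Qed.

Definition sublin {X} (q : (X -> R) -> R) : Prop :=
  (forall f g, is_gamble f -> is_gamble g -> q (fun x => f x + g x) <= q f + q g) /\
  (forall t f, 0 <= t -> is_gamble f -> q (fun x => t * f x) = t * q f).

Lemma sublin_zero {X} (q : (X -> R) -> R) : sublin q -> q (fun _ => 0) = 0.
Proof.
  intros [_ Hh]. specialize (Hh 0 (fun _ => 0) (Rle_refl 0) (gam_const 0)). cbv beta in Hh.
  replace (fun _ : X => 0 * 0) with (fun _ : X => 0) in Hh by (fext; ring). lra.
Qed.

Lemma sublin_pm {X} (q : (X -> R) -> R) f : sublin q -> is_gamble f -> 0 <= q f + q (fun x => - f x).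
Proof.
  intros Hq Hf. pose proof (proj1 Hq f (fun x => - f x) Hf (gam_opp f Hf)) as H.
  cbv beta in H. replace (fun x : X => f x + - f x) with (fun _ : X => 0) in H by (fext; ring).
  rewrite (sublin_zero q Hq) in H; auto.
Qed.

Definition rext {X} (q : (X->R)->R) (a : X -> R) (y : X -> R) : R :=
  glb (fun v => exists t, 0 <= t /\ v = q (fun x => y x + t * a x) - t * q a).

Lemma rext_spec {X} (q : (X->R)->R) a y : sublin q -> is_gamble a -> is_gamble y ->
  (forall t, 0 <= t -> rext q a y <= q (fun x => y x + t * a x) - t * q a) /\
  (forall eps, 0 < eps -> exists t, 0 <= t /\ q (fun x => y x + t * a x) - t * q a < rext q a y + eps) /\
  - q (fun x => - y x) <= rext q a y.
Proof.
  intros Hq Ha Hy.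
  destruct (glb_spec (fun v => exists t, 0 <= t /\ v = q (fun x => y x + t * a x) - t * q a)
     (q (fun x => y x + 0 * a x) - 0 * q a) (- q (fun x => - y x))) as [A [B C]].
  - exists 0; split; [lra|reflexivity].
  - intros v [t [Ht ->]].
    assert (E : (fun x => t * a x) = (fun x => (y x + t * a x) + - y x)) by (fext; ring).
    pose proof (proj1 Hq (fun x => y x + t * a x) (fun x => - y x)
       (gam_add _ _ Hy (gam_scal t a Ha)) (gam_opp y Hy)) as H.
    cbv beta in H. rewrite <- E in H. rewrite (proj2 Hq t a Ht Ha) in H. lra.
  - unfold rext. split; [|split]; auto.
    + intros t Ht. apply A. exists t; auto.
    + intros eps He. destruct (B eps He) as [v [[t [Ht ->]] Hv]]. exists t; auto.
Qed.

Lemma rext_le {X} (q : (X->R)->R) a y : sublin q -> is_gamble a -> is_gamble y -> rext q a y <= q y.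
Proof.
  intros Hq Ha Hy. destruct (rext_spec q a y Hq Ha Hy) as [A _].
  specialize (A 0 (Rle_refl 0)).
  replace (fun x => y x + 0 * a x) with y in A by (fext; ring). lra.
Qed.

Lemma rext_neg {X} (q : (X->R)->R) a : sublin q -> is_gamble a -> rext q a (fun x => - a x) <= - q a.
Proof.
  intros Hq Ha. destruct (rext_spec q a (fun x => - a x) Hq Ha (gam_opp a Ha)) as [A _].
  specialize (A 1 Rle_0_1).
  replace (fun x => - a x + 1 * a x) with (fun _ : X => 0) in A by (fext; ring).
  rewrite (sublin_zero q Hq) in A. lra.
Qed.

Lemma rext_sublin {X} (q : (X->R)->R) a : sublin q -> is_gamble a -> sublin (rext q a).
Proof.
  intros Hq Ha. split.
  - intros f g Hf Hg. apply le_eps. intros eps He.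
    destruct (rext_spec q a f Hq Ha Hf) as [_ [Bf _]].
    destruct (rext_spec q a g Hq Ha Hg) as [_ [Bg _]].
    destruct (Bf (eps/2)) as [t1 [Ht1 H1]]; [lra|].
    destruct (Bg (eps/2)) as [t2 [Ht2 H2]]; [lra|].
    destruct (rext_spec q a _ Hq Ha (gam_add f g Hf Hg)) as [A _].
    specialize (A (t1 + t2) ltac:(lra)).
    pose proof (proj1 Hq (fun x => f x + t1 * a x) (fun x => g x + t2 * a x)
      (gam_add _ _ Hf (gam_scal _ _ Ha)) (gam_add _ _ Hg (gam_scal _ _ Ha))) as S.
    replace (fun x => (f x + g x) + (t1 + t2) * a x) with
      (fun x => (f x + t1 * a x) + (g x + t2 * a x)) in A by (fext; ring).
    lra.
  - intros t f Ht Hf. destruct (Req_dec t 0) as [-> | Hne].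
    + rewrite Rmult_0_l. unfold rext. apply glb_char.
      * intros v [s [Hs ->]].
        replace (fun x => 0 * f x + s * a x) with (fun x => s * a x) by (fext; ring).
        rewrite (proj2 Hq s a Hs Ha). lra.
      * intros eps He. exists 0. split; [|lra]. exists 0. split; [lra|].
        replace (fun x => 0 * f x + 0 * a x) with (fun x => 0 * a x) by (fext; ring).
        rewrite (proj2 Hq 0 a (Rle_refl 0) Ha). ring.
    + assert (Htp : 0 < t) by lra.
      destruct (rext_spec q a f Hq Ha Hf) as [Af [Bf _]].
      unfold rext at 1. apply glb_char.
      * intros v [s [Hs ->]].
        replace (fun x => t * f x + s * a x) with (fun x => t * (f x + (s / t) * a x))
          by (fext; field; lra).
        rewrite (proj2 Hq t _ (Rlt_le _ _ Htp) (gam_add _ _ Hf (gam_scal _ _ Ha))).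
        assert (0 <= s / t) by (apply Rdiv_le_0_compat; lra).
        specialize (Af (s / t) H).
        replace (s * q a) with (t * (s / t * q a)) by (field; lra).
        rewrite <- Rmult_minus_distr_l. apply Rmult_le_compat_l; lra.
      * intros eps He. destruct (Bf (eps / t)) as [s [Hs Hv]].
        { apply Rdiv_lt_0_compat; lra. }
        exists (t * (q (fun x => f x + s * a x) - s * q a)). split.
        -- exists (t * s). split; [nra|].
           replace (fun x => t * f x + t * s * a x) with (fun x => t * (f x + s * a x)) by (fext; ring).
           rewrite (proj2 Hq t _ (Rlt_le _ _ Htp) (gam_add _ _ Hf (gam_scal _ _ Ha))). ring.
        -- apply Rmult_lt_compat_l with (r := t) in Hv; auto.
           replace (t * (rext q a f + eps / t)) with (t * rext q a f + eps) in Hv by (field; lra).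
           lra.
Qed.

Lemma HB {X} (p : (X->R)->R) (h : X -> R) : sublin p -> is_gamble h ->
  exists P, sublin P /\ (forall f, is_gamble f -> P f <= p f) /\
    (forall f, is_gamble f -> P (fun x => - f x) = - P f) /\ p h <= P h.
Proof.
  intros Hp Hh.
  set (p0 := rext p h).
  assert (Hp0 : sublin p0) by (apply rext_sublin; auto).
  set (TT := {q : (X->R)->R | sublin q /\ forall f, is_gamble f -> q f <= p0 f}).
  set (Rl := fun s1 s2 : TT => forall f, is_gamble f -> proj1_sig s2 f <= proj1_sig s1 f).
  set (t0 := exist (fun q => sublin q /\ forall f, is_gamble f -> q f <= p0 f) p0
                   (conj Hp0 (fun f _ => Rle_refl (p0 f))) : TT).
  destruct (zorn_pre TT t0 Rl) as [qs Hqs].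
  - intros t f _; lra.
  - intros r s t H1 H2 f Hf. specialize (H1 f Hf); specialize (H2 f Hf); lra.
  - intros A HA.
    assert (Hbelow : forall s1 s2, (A s1 \/ s1 = t0) -> (A s2 \/ s2 = t0) ->
       exists s, (A s \/ s = t0) /\ Rl s1 s /\ Rl s2 s).
    { intros s1 s2 H1 H2.
      destruct H1 as [H1| ->].
      - destruct H2 as [H2| ->].
        + destruct (HA s1 s2 H1 H2) as [h12|h21].
          * exists s2. split; auto. split; auto. intros f Hf; lra.
          * exists s1. split; auto. split; auto. intros f Hf; lra.
        + exists s1. split; auto. split. intros f Hf; lra.
          intros f Hf. destruct s1 as [q [Hq1 Hq2]]. simpl. auto.
      - exists s2. split; auto. split.
        + intros f Hf. destruct s2 as [q [Hq1 Hq2]]. simpl. auto.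
        + intros f Hf; lra. }
    set (E := fun f v => exists s : TT, (A s \/ s = t0) /\ v = proj1_sig s f).
    set (qA := fun f => glb (E f)).
    assert (Hspec : forall f, is_gamble f ->
      (forall v, E f v -> qA f <= v) /\ (forall eps, 0 < eps -> exists v, E f v /\ v < qA f + eps)).
    { intros f Hf.
      destruct (glb_spec (E f) (p0 f) (- p0 (fun x => - f x))) as [A1 [A2 _]].
      - exists t0. split; auto.
      - intros v [s [_ ->]]. destruct s as [q [Hq1 Hq2]]. simpl.
        pose proof (sublin_pm q f Hq1 Hf). pose proof (Hq2 _ (gam_opp f Hf)). lra.
      - split; auto. }
    assert (HqA : sublin qA).
    { split.
      - intros f g Hf Hg. apply le_eps. intros eps He.
        destruct (proj2 (Hspec f Hf) (eps/2)) as [v1 [[s1 [Hs1 ->]] Hv1]]; [lra|].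
        destruct (proj2 (Hspec g Hg) (eps/2)) as [v2 [[s2 [Hs2 ->]] Hv2]]; [lra|].
        destruct (Hbelow s1 s2 Hs1 Hs2) as [s [Hs [B1 B2]]].
        assert (Hle := proj1 (Hspec _ (gam_add f g Hf Hg)) (proj1_sig s (fun x => f x + g x))
                        (ex_intro _ s (conj Hs eq_refl))).
        specialize (B1 f Hf); specialize (B2 g Hg).
        destruct s as [q [Hq1 Hq2]]; simpl in *.
        pose proof (proj1 Hq1 f g Hf Hg). lra.
      - intros t f Ht Hf. destruct (Req_dec t 0) as [-> | Hne].
        + rewrite Rmult_0_l. unfold qA. apply glb_char.
          * intros v [s [_ ->]]. destruct s as [q [Hq1 Hq2]]; simpl.
            rewrite (proj2 Hq1 0 f (Rle_refl 0) Hf). lra.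
          * intros eps He. exists 0. split; [|lra]. exists t0. split; auto. simpl.
            rewrite (proj2 Hp0 0 f (Rle_refl 0) Hf). ring.
        + assert (Htp : 0 < t) by lra.
          unfold qA at 1. apply glb_char.
          * intros v [s [Hs ->]].
            assert (Hle := proj1 (Hspec f Hf) (proj1_sig s f) (ex_intro _ s (conj Hs eq_refl))).
            destruct s as [q [Hq1 Hq2]]; simpl in *.
            rewrite (proj2 Hq1 t f (Rlt_le _ _ Htp) Hf).
            apply Rmult_le_compat_l; lra.
          * intros eps He. destruct (proj2 (Hspec f Hf) (eps / t)) as [v [[s [Hs ->]] Hv]].
            { apply Rdiv_lt_0_compat; lra. }
            exists (proj1_sig s (fun x => t * f x)). split.
            -- exists s; auto.
            -- destruct s as [q [Hq1 Hq2]]; simpl in *.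
               rewrite (proj2 Hq1 t f (Rlt_le _ _ Htp) Hf).
               apply Rmult_lt_compat_l with (r := t) in Hv; auto.
               replace (t * (qA f + eps / t)) with (t * qA f + eps) in Hv by (field; lra).
               lra. }
    assert (HqA2 : forall f, is_gamble f -> qA f <= p0 f).
    { intros f Hf. apply (proj1 (Hspec f Hf)). exists t0. split; auto. }
    exists (exist (fun q => sublin q /\ forall f, is_gamble f -> q f <= p0 f) qA (conj HqA HqA2)).
    intros s Hs f Hf. simpl. apply (proj1 (Hspec f Hf)). exists s. split; auto.
  - destruct qs as [Q [HQ1 HQ2]].
    assert (Hodd : forall a, is_gamble a -> Q (fun x => - a x) = - Q a).
    { intros a Ha.
      assert (Hr1 : sublin (rext Q a)) by (apply rext_sublin; auto).
      assert (Hr2 : forall f, is_gamble f -> rext Q a f <= p0 f).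
      { intros f Hf. eapply Rle_trans; [apply rext_le; auto|]. auto. }
      set (rr := exist (fun q => sublin q /\ forall f, is_gamble f -> q f <= p0 f) (rext Q a) (conj Hr1 Hr2) : TT).
      assert (H := Hqs rr).
      assert (H1 : Rl (exist _ Q (conj HQ1 HQ2)) rr).
      { intros f Hf. simpl. apply rext_le; auto. }
      specialize (H H1 _ (gam_opp a Ha)). simpl in H.
      pose proof (rext_neg Q a HQ1 Ha).
      pose proof (sublin_pm Q a HQ1 Ha). lra. }
    exists Q. split; auto. split; [|split; auto].
    + intros f Hf. eapply Rle_trans; [apply HQ2; auto|]. apply rext_le; auto.
    + pose proof (HQ2 _ (gam_opp h Hh)). pose proof (rext_neg p h Hp Hh).
      rewrite (Hodd h Hh) in H. unfold p0 in H. lra.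
Qed.

Section dummy. End dummy.

Lemma coh_L1 {X} (P : (X->R)->R) f : coherent_lp P -> is_gamble f ->
  forall eps, 0 < eps -> exists x, f x < P f + eps.
Proof.
  intros Hc Hf eps He. destruct (Hc 1%nat 0%nat (fun _ => f) (fun _ _ => Hf) eps He) as [x Hx].
  exists x. unfold rsum in Hx; simpl in Hx. lra.
Qed.

Lemma coh_lb {X} (P : (X->R)->R) f c : coherent_lp P -> is_gamble f ->
  (forall x, c <= f x) -> c <= P f.
Proof.
  intros Hc Hf Hl. apply Rnot_lt_le. intro Hlt.
  destruct (coh_L1 P f Hc Hf (c - P f)) as [x Hx]; [lra|]. specialize (Hl x). lra.
Qed.

Lemma coh_ub {X} (P : (X->R)->R) f c : coherent_lp P -> is_gamble f ->
  (forall x, f x <= c) -> P f <= c.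
Proof.
  intros Hc Hf Hl. apply Rnot_lt_le. intro Hlt.
  destruct (Hc 0%nat 1%nat (fun _ => f) (fun _ _ => Hf) (P f - c)) as [x Hx]; [lra|].
  unfold rsum in Hx; simpl in Hx. specialize (Hl x). lra.
Qed.

Lemma coh_add {X} (P : (X->R)->R) f g : coherent_lp P -> is_gamble f -> is_gamble g ->
  P f + P g <= P (fun x => f x + g x).
Proof.
  intros Hc Hf Hg. apply le_eps. intros eps He.
  set (fs := fun k : nat => match k with 0%nat => (fun x => f x + g x) | 1%nat => f | _ => g end).
  assert (Hfs : forall k, (k <= 2)%nat -> is_gamble (fs k)).
  { intros [|[|k]] _; simpl; auto. apply gam_add; auto. }
  destruct (Hc 1%nat 2%nat fs Hfs eps He) as [x Hx].
  unfold rsum in Hx; simpl in Hx. lra.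
Qed.

Lemma coh_nle {X} (P : (X->R)->R) f n : coherent_lp P -> is_gamble f ->
  P (fun x => INR n * f x) <= INR n * P f.
Proof.
  intros Hc Hf. apply le_eps. intros eps He.
  set (fs := fun k : nat => match k with 0%nat => f | _ => (fun x => INR n * f x) end).
  assert (Hfs : forall k, (k <= 1)%nat -> is_gamble (fs k)).
  { intros [|k] _; simpl; auto. apply gam_scal; auto. }
  destruct (Hc n 1%nat fs Hfs eps He) as [x Hx].
  unfold rsum in Hx; simpl in Hx. lra.
Qed.

Lemma coh_nat {X} (P : (X->R)->R) f n : coherent_lp P -> is_gamble f ->
  P (fun x => INR n * f x) = INR n * P f.
Proof.
  intros Hc Hf. apply Rle_antisym; [apply coh_nle; auto|].
  induction n.
  - simpl. rewrite Rmult_0_l. apply coh_lb; auto. apply gam_scal; auto. intros; simpl; lra.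
  - replace (fun x => INR (S n) * f x) with (fun x => f x + INR n * f x) by (fext; rewrite S_INR; ring).
    eapply Rle_trans; [|apply coh_add; auto; apply gam_scal; auto].
    rewrite S_INR. lra.
Qed.

Lemma coh_rat {X} (P : (X->R)->R) f m n : coherent_lp P -> is_gamble f -> (n > 0)%nat ->
  P (fun x => INR m / INR n * f x) = INR m / INR n * P f.
Proof.
  intros Hc Hf Hn. assert (Hn' : 0 < INR n) by (apply lt_0_INR; lia).
  pose proof (coh_nat P (fun x => INR m / INR n * f x) n Hc (gam_scal _ _ Hf)) as H1.
  cbv beta in H1.
  replace (fun x => INR n * (INR m / INR n * f x)) with (fun x => INR m * f x) in H1 by (fext; field; lra).
  rewrite coh_nat in H1; auto.
  apply Rmult_eq_reg_l with (INR n); [|lra]. rewrite <- H1. field. lra.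
Qed.

Lemma coh_lip {X} (P : (X->R)->R) f M t s : coherent_lp P -> is_gamble f ->
  (forall x, Rabs (f x) <= M) -> P (fun x => t * f x) <= P (fun x => s * f x) + Rabs (t - s) * M.
Proof.
  intros Hc Hf HM.
  pose proof (coh_add P (fun x => t * f x) (fun x => (s - t) * f x) Hc (gam_scal _ _ Hf) (gam_scal _ _ Hf)) as H.
  cbv beta in H.
  replace (fun x => t * f x + (s - t) * f x) with (fun x => s * f x) in H by (fext; ring).
  assert (H2 : - (Rabs (t - s) * M) <= P (fun x => (s - t) * f x)).
  { apply coh_lb; auto. apply gam_scal; auto. intros x.
    assert (Rabs ((s - t) * f x) <= Rabs (t - s) * M).
    { rewrite Rabs_mult. rewrite Rabs_minus_sym. apply Rmult_le_compat_l; auto. apply Rabs_pos. }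
    apply Rabs_le_between in H0. lra. }
  lra.
Qed.

Lemma small_zero (d C : R) : 0 <= C -> (forall n : nat, (n > 0)%nat -> Rabs d <= C / INR n) -> d = 0.
Proof.
  intros HC H. destruct (Req_dec d 0) as [|Hd]; auto. exfalso.
  assert (Hpos : 0 < Rabs d) by (apply Rabs_pos_lt; auto).
  destruct (archimed (C / Rabs d)) as [Hu _].
  set (n := S (Z.to_nat (up (C / Rabs d)))).
  assert (Hn : C / Rabs d < INR n).
  { unfold n. rewrite S_INR. destruct (Z.le_gt_cases 0 (up (C / Rabs d))) as [Hz|Hz].
    - rewrite INR_IZR_INZ, Z2Nat.id; auto. lra.
    - assert (IZR (up (C / Rabs d)) <= 0) by (apply IZR_le; lia). pose proof (pos_INR (Z.to_nat (up (C / Rabs d)))). lra. }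
  specialize (H n ltac:(unfold n; lia)).
  assert (Hn0 : 0 < INR n) by (apply lt_0_INR; unfold n; lia).
  apply Rmult_le_compat_r with (r := INR n) in H; [|lra].
  replace (C / INR n * INR n) with C in H by (field; lra).
  assert (C < Rabs d * INR n).
  { apply Rmult_lt_compat_l with (r := Rabs d) in Hn; auto.
    replace (Rabs d * (C / Rabs d)) with C in Hn by (field; lra). lra. }
  lra.
Qed.

Lemma coh_hom {X} (P : (X->R)->R) f t : coherent_lp P -> is_gamble f -> 0 <= t ->
  P (fun x => t * f x) = t * P f.
Proof.
  intros Hc Hf Ht. destruct Hf as [M0 HM0].
  set (M := Rabs M0).
  assert (HM : forall x, Rabs (f x) <= M) by (intros x; unfold M; eapply Rle_trans; [apply HM0|apply RRle_abs]).
  assert (Hf : is_gamble f) by (exists M0; auto).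
  assert (HMp : 0 <= M) by apply Rabs_pos.
  apply Rminus_diag_uniq.
  apply (small_zero _ (M + Rabs (P f))); [pose proof (Rabs_pos (P f)); lra|].
  intros n Hn. assert (Hn' : 0 < INR n) by (apply lt_0_INR; lia).
  destruct (archimed (t * INR n)) as [Hu1 Hu2].
  assert (Hup : (0 < up (t * INR n))%Z).
  { apply lt_IZR. pose proof (Rmult_le_pos _ _ Ht (Rlt_le _ _ Hn')). lra. }
  set (m := Z.to_nat (up (t * INR n))).
  assert (Hm : INR m = IZR (up (t * INR n))) by (unfold m; rewrite INR_IZR_INZ, Z2Nat.id; auto; lia).
  set (q := INR m / INR n).
  assert (Hqe : q - t = (IZR (up (t * INR n)) - t * INR n) / INR n) by (unfold q; rewrite Hm; field; lra).
  assert (Hq1 : 0 <= q - t) by (rewrite Hqe; apply Rdiv_le_0_compat; lra).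
  assert (Hq2 : q - t <= 1 / INR n) by (rewrite Hqe; unfold Rdiv; apply Rmult_le_compat_r;
     [left; apply Rinv_0_lt_compat; lra | lra]).
  pose proof (coh_lip P f M t q Hc Hf HM) as A1.
  pose proof (coh_lip P f M q t Hc Hf HM) as A2.
  pose proof (coh_rat P f m n Hc Hf Hn) as A3. fold q in A3.
  rewrite A3 in A1, A2.
  rewrite Rabs_minus_sym in A1. rewrite (Rabs_right (q - t)) in A1, A2 by lra.
  assert (Hd : Rabs ((q - t) * P f) <= (q - t) * Rabs (P f)).
  { rewrite Rabs_mult, Rabs_right by lra. lra. }
  apply Rabs_le_between in Hd.
  assert (Hb : (q - t) * (M + Rabs (P f)) <= (M + Rabs (P f)) / INR n).
  { unfold Rdiv. rewrite Rmult_comm. apply Rmult_le_compat_l. pose proof (Rabs_pos (P f)); lra.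
    unfold Rdiv in Hq2. lra. }
  apply Rabs_le. lra.
Qed.

Lemma credal_exists {X} (lowP : (X->R)->R) g : coherent_lp lowP -> is_gamble g ->
  exists P, credal lowP P /\ P g <= lowP g.
Proof.
  intros Hc Hg.
  set (p := fun f : X -> R => - lowP (fun x => - f x)).
  assert (Hp : sublin p).
  { split.
    - intros f h Hf Hh. unfold p.
      pose proof (coh_add lowP (fun x => - f x) (fun x => - h x) Hc (gam_opp _ Hf) (gam_opp _ Hh)) as H.
      cbv beta in H.
      replace (fun x => - f x + - h x) with (fun x => - (f x + h x)) in H by (fext; ring). lra.
    - intros t f Ht Hf. unfold p.
      replace (fun x => - (t * f x)) with (fun x => t * (- f x)) by (fext; ring).
      rewrite (coh_hom lowP (fun x => - f x) t Hc (gam_opp _ Hf) Ht). ring. }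
  destruct (HB p (fun x => - g x) Hp (gam_opp _ Hg)) as [P [HP1 [HP2 [HP3 HP4]]]].
  assert (Hdom : forall f, is_gamble f -> lowP f <= P f).
  { intros f Hf. pose proof (HP2 _ (gam_opp _ Hf)) as H. rewrite HP3 in H by auto.
    unfold p in H. replace (fun x => - - f x) with f in H by (fext; ring). lra. }
  exists P. split; [split; [split; [|split; [|split]]|]|]; auto.
  - intros f h Hf Hh. apply Rle_antisym; [apply HP1; auto|].
    pose proof (proj1 HP1 (fun x => - f x) (fun x => - h x) (gam_opp _ Hf) (gam_opp _ Hh)) as H.
    cbv beta in H.
    replace (fun x => - f x + - h x) with (fun x => - (f x + h x)) in H by (fext; ring).
    rewrite !HP3 in H by (auto; apply gam_add; auto). lra.
  - intros c f Hf. destruct (Rle_lt_dec 0 c) as [Hc0|Hc0].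
    + apply HP1; auto.
    + replace (fun x => c * f x) with (fun x => - ((- c) * f x)) by (fext; ring).
      rewrite HP3 by (apply gam_scal; auto). rewrite (proj2 HP1 (-c) f) by (auto; lra). ring.
  - intros f Hf Hpos. eapply Rle_trans; [|apply Hdom; auto]. apply coh_lb; auto.
  - apply Rle_antisym.
    + pose proof (Hdom (fun _ => -1) (gam_const _)) as H.
      replace (fun _ : X => -1) with (fun x : X => - (fun _ => 1) x) in H by (fext; ring).
      rewrite HP3 in H by apply gam_const.
      assert (-1 <= lowP (fun x : X => - (fun _ => 1) x)) by (apply coh_lb; auto; [apply gam_opp, gam_const|intros; lra]).
      lra.
    + eapply Rle_trans; [|apply Hdom, gam_const]. apply coh_lb; auto; [apply gam_const|intros; lra].
  - rewrite HP3 in HP4 by auto. unfold p in HP4.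
    replace (fun x => - - g x) with g in HP4 by (fext; ring). lra.
Qed.

Lemma indic_01 {X} (A : X -> Prop) x : (A x /\ indic A x = 1) \/ (~ A x /\ indic A x = 0).
Proof. unfold indic. destruct (excluded_middle_informative (A x)); auto. Qed.

Definition Fsum {Y T} (l : list Y) (z : Y * T) : R :=
  fold_right (fun y acc => indic (@Bset Y T y) z + acc) 0 l.

Lemma Fsum_bounds {Y T} (l : list Y) (z : Y * T) : 0 <= Fsum l z <= INR (length l).
Proof.
  induction l as [|a l IH]; [simpl; lra|].
  change (length (a :: l)) with (S (length l)). rewrite S_INR.
  change (Fsum (a :: l) z) with (indic (@Bset Y T a) z + Fsum l z).
  destruct (indic_01 (@Bset Y T a) z) as [[_ ->]|[_ ->]]; lra.
Qed.

Lemma Fsum_gamble {Y T} (l : list Y) : is_gamble (@Fsum Y T l).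
Proof.
  exists (INR (length l)). intros z. destruct (Fsum_bounds l z). rewrite Rabs_right; lra.
Qed.

Lemma Fsum_notin {Y T} (l : list Y) (z : Y * T) : ~ In (fst z) l -> Fsum l z = 0.
Proof.
  induction l as [|a l IH]; simpl; intros Hn; auto.
  rewrite IH by tauto. destruct (indic_01 (@Bset Y T a) z) as [[Hb _]|[_ ->]]; [|lra].
  unfold Bset in Hb. exfalso; apply Hn; auto.
Qed.

Lemma Fsum_le1 {Y T} (l : list Y) (z : Y * T) : NoDup l -> Fsum l z <= 1.
Proof.
  induction l as [|a l IH]; simpl; intros Hn; [lra|].
  inversion Hn; subst.
  destruct (indic_01 (@Bset Y T a) z) as [[Hb ->]|[_ ->]].
  - unfold Bset in Hb. rewrite Fsum_notin; [lra|]. rewrite Hb; auto.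
  - specialize (IH H2). lra.
Qed.

Lemma Fsum_low {Y T} (lowP : (Y * T -> R) -> R) (l : list Y) c : coherent_lp lowP ->
  (forall y, In y l -> c < lowP (indic (@Bset Y T y))) -> INR (length l) * c <= lowP (Fsum l).
Proof.
  intros Hc. induction l as [|a l IH]; intros Hl.
  - simpl. rewrite Rmult_0_l. apply coh_lb; auto. apply Fsum_gamble. intros; simpl; lra.
  - simpl length. rewrite S_INR.
    assert (Hf : Fsum (a :: l) = fun z => indic (@Bset Y T a) z + Fsum l z) by reflexivity.
    rewrite Hf.
    assert (Hi : is_gamble (indic (@Bset Y T a))).
    { exists 1. intros z. destruct (indic_01 (@Bset Y T a) z) as [[_ ->]|[_ ->]]; rewrite ?Rabs_R1, ?Rabs_R0; lra. }
    pose proof (coh_add lowP _ _ Hc Hi (Fsum_gamble l)).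
    pose proof (IH (fun y H => Hl y (or_intror H))). pose proof (Hl a (or_introl eq_refl)). lra.
Qed.

Lemma finite_level {Y T} (lowP : (Y * T -> R) -> R) (n : nat) : coherent_lp lowP -> (n > 0)%nat ->
  exists l : list Y, forall y, / INR n < lowP (indic (@Bset Y T y)) -> In y l.
Proof.
  intros Hc Hn. apply NNPP. intro Hno.
  assert (Hall : forall j, exists l : list Y, NoDup l /\ (forall y, In y l -> / INR n < lowP (indic (@Bset Y T y))) /\ length l = j).
  { induction j as [|j [l [H1 [H2 H3]]]].
    - exists nil. split; [constructor|]. split; simpl; auto. tauto.
    - apply not_ex_all_not with (n := l) in Hno.
      apply not_all_ex_not in Hno. destruct Hno as [y Hy].
      apply imply_to_and in Hy. destruct Hy as [Hy1 Hy2].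
      exists (y :: l). split; [constructor; auto|]. split; simpl; [|lia].
      intros y' [<-|Hin]; auto. }
  destruct (Hall (S n)) as [l [H1 [H2 H3]]].
  pose proof (Fsum_low lowP l _ Hc H2).
  assert (lowP (Fsum l) <= 1) by (apply coh_ub; auto; [apply Fsum_gamble|intros; apply Fsum_le1; auto]).
  rewrite H3, S_INR in H.
  assert (Hn' : 0 < INR n) by (apply lt_0_INR; lia).
  replace ((INR n + 1) * / INR n) with (1 + / INR n) in H by (field; lra).
  pose proof (Rinv_0_lt_compat _ Hn'). lra.
Qed.

Fixpoint pos {Y} (y : Y) (l : list Y) : nat :=
  match l with nil => 0%nat | a :: l' => if excluded_middle_informative (a = y) then 0%nat else S (pos y l') end.

Lemma pos_nth {Y} (y d : Y) l : In y l -> nth (pos y l) l d = y.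
Proof.
  induction l as [|a l IH]; simpl; [tauto|]. intros [<-|Hin].
  - destruct (excluded_middle_informative (a = a)); [auto|tauto].
  - destruct (excluded_middle_informative (a = y)); auto.
Qed.

Lemma countable_pos {Y T} (lowP : (Y * T -> R) -> R) (Sy : Y -> Prop) : coherent_lp lowP ->
  (forall y, Sy y -> 0 < lowP (indic (@Bset Y T y))) -> countable_set Sy.
Proof.
  intros Hc HS.
  set (N := fun y : Y => S (Z.to_nat (up (/ lowP (indic (@Bset Y T y)))))).
  set (L := fun n : nat => epsilon (inhabits (@nil Y))
                (fun l => forall y, / INR n < lowP (indic (@Bset Y T y)) -> In y l)).
  assert (HN : forall y, Sy y -> In y (L (N y))).
  { intros y Hy.
    assert (Hpos : (N y > 0)%nat) by (unfold N; lia).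
    pose proof (epsilon_spec (inhabits (@nil Y))
      (fun l => forall y', / INR (N y) < lowP (indic (@Bset Y T y')) -> In y' l)
      (finite_level lowP (N y) Hc Hpos)) as E.
    apply E. specialize (HS y Hy).
    set (v := lowP (indic (@Bset Y T y))) in *.
    assert (Hinv : / v < INR (N y)).
    { destruct (archimed (/ v)) as [Hu _].
      assert (Hv' : 0 < / v) by (apply Rinv_0_lt_compat; auto).
      assert (Hz : (0 < up (/ v))%Z) by (apply lt_IZR; lra).
      unfold N. fold v. rewrite S_INR, INR_IZR_INZ, Z2Nat.id by lia. lra. }
    assert (Hv' : 0 < / v) by (apply Rinv_0_lt_compat; auto).
    pose proof (Rinv_lt_contravar _ _ (Rmult_lt_0_compat _ _ Hv' (Rlt_trans _ _ _ Hv' Hinv)) Hinv) as H.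
    rewrite Rinv_inv in H. exact H. }
  exists (fun y => Cantor.to_nat (N y, pos y (L (N y)))).
  intros a b Ha Hb Heq.
  apply (f_equal Cantor.of_nat) in Heq. rewrite !Cantor.cancel_of_to in Heq.
  assert (Hn : N a = N b) by (apply (f_equal fst) in Heq; exact Heq).
  assert (Hp : pos a (L (N a)) = pos b (L (N b))) by (apply (f_equal snd) in Heq; exact Heq).
  assert (E1 := pos_nth a a _ (HN a Ha)). assert (E2 := pos_nth b a _ (HN b Hb)).
  rewrite <- Hn in Hp, E2. rewrite <- Hp in E2. congruence.
Qed.

Lemma indic_gamble {X} (A : X -> Prop) : is_gamble (indic A).
Proof. exists 1. intros z. destruct (indic_01 A z) as [[_ ->]|[_ ->]]; rewrite ?Rabs_R1, ?Rabs_R0; lra. Qed.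

Theorem proposition1 (Y T : Type) (lowP : (Y * T -> R) -> R)
  (Pi : Y -> (T -> R) -> R) :
  coherent_lp lowP ->
  conglomerable lowP ->
  (forall y, coherent_lp (Pi y)) ->
  (forall (y : Y) (f : Y * T -> R), is_gamble f ->
     Rbar_le (Finite (Pi y (fun th => f (y, th)))) (GenBayes lowP y f)) ->
  forall (H : T -> Prop) (beta : R), 0 <= beta <= 1 ->
    lowP (fHbeta Pi H beta) >= 0.
Proof.
  intros Hc Hcong _ HGB H beta Hb.
  set (f := fHbeta Pi H beta).
  assert (Hfv : forall z, (indic H (snd z) = 1 \/ indic H (snd z) = 0) /\
     f z = (indic H (snd z) - beta) * (if Rlt_dec beta (Pi (fst z) (indic H)) then 1 else 0)).
  { intros z. split; [|reflexivity]. destruct (indic_01 H (snd z)) as [[_ ->]|[_ ->]]; auto. }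
  assert (Hfg : is_gamble f).
  { exists 1. intros z. destruct (Hfv z) as [[E|E] F]; rewrite F, E;
    destruct (Rlt_dec beta (Pi (fst z) (indic H))); apply Rabs_le; lra. }
  apply Rle_ge.
  destruct (classic (forall th, H th)) as [Hall|Hnall].
  - apply coh_lb; auto. intros z. destruct (Hfv z) as [_ F]. rewrite F.
    destruct (indic_01 H (snd z)) as [[_ ->]|[Hn _]]; [|exfalso; apply Hn; auto].
    destruct (Rlt_dec beta (Pi (fst z) (indic H))); lra.
  - apply not_all_ex_not in Hnall. destruct Hnall as [th0 Hth0].
    set (Sy := fun y => beta < Pi y (indic H)).
    assert (K : forall y, Sy y -> 0 < lowP (indic (@Bset Y T y)) /\
                 0 < lowP (fun z => indic (@Bset Y T y) z * f z)).
    { intros y Hy.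
      assert (Hhg : is_gamble (fun z : Y * T => indic H (snd z))).
      { exists 1. intros z. destruct (indic_01 H (snd z)) as [[_ ->]|[_ ->]]; rewrite ?Rabs_R1, ?Rabs_R0; lra. }
      pose proof (HGB y (fun z => indic H (snd z)) Hhg) as Hg.
      change (Rbar_le (Finite (Pi y (indic H))) (GenBayes lowP y (fun z => indic H (snd z)))) in Hg.
      unfold GenBayes in Hg. destruct (Rlt_dec 0 (lowP (indic (Bset y)))) as [Hpos|Hnpos].
      - split; auto.
        apply Rnot_le_lt. intro Hle.
        set (gy := fun z => indic (@Bset Y T y) z * f z) in *.
        assert (Hgy : is_gamble gy).
        { exists 1. intros z. unfold gy. destruct (Hfv z) as [[E|E] F]; rewrite F, E;
          destruct (indic_01 (@Bset Y T y) z) as [[_ ->]|[_ ->]];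
          destruct (Rlt_dec beta (Pi (fst z) (indic H))); apply Rabs_le; lra. }
        destruct (credal_exists lowP gy Hc Hgy) as [P [HP HPg]].
        assert (Egy : gy = fun z => (indic H (snd z) * indic (Bset y) z) + (- beta) * indic (@Bset Y T y) z).
        { apply functional_extensionality; intro z. unfold gy. destruct (Hfv z) as [_ F]. rewrite F.
          destruct (indic_01 (@Bset Y T y) z) as [[Hz ->]|[_ ->]]; [|ring].
          unfold Bset in Hz. rewrite Hz.
          destruct (Rlt_dec beta (Pi y (indic H))); [ring|]. unfold Sy in Hy; lra. }
        pose proof HP as HP'. destruct HP' as [[Hadd [Hsc _]] Hdom].
        assert (Hn1 : is_gamble (fun z => indic H (snd z) * indic (@Bset Y T y) z)).
        { exists 1. intros z. destruct (indic_01 H (snd z)) as [[_ ->]|[_ ->]];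
          destruct (indic_01 (@Bset Y T y) z) as [[_ ->]|[_ ->]]; apply Rabs_le; lra. }
        assert (HPe : P gy = P (fun z => indic H (snd z) * indic (@Bset Y T y) z) + (- beta) * P (indic (@Bset Y T y))).
        { rewrite Egy.
          rewrite (Hadd (fun z => indic H (snd z) * indic (Bset y) z) (fun z => (- beta) * indic (@Bset Y T y) z) Hn1
            (gam_scal _ _ (indic_gamble _))).
          rewrite (Hsc (- beta) (indic (@Bset Y T y)) (indic_gamble _)). reflexivity. }
        rewrite HPe in HPg.
        assert (HD : lowP (indic (Bset y)) <= P (indic (@Bset Y T y))) by (apply Hdom, indic_gamble).
        set (Nn := P (fun z => indic H (snd z) * indic (@Bset Y T y) z)) in *.
        set (D := P (indic (@Bset Y T y))) in *.
        assert (Hratio : Nn / D <= beta).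
        { apply Rmult_le_reg_r with D; [lra|]. unfold Rdiv. rewrite Rmult_assoc, Rinv_l by lra. lra. }
        destruct (Glb_Rbar_correct (fun r => exists P0, credal lowP P0 /\
            r = P0 (fun z => indic H (snd z) * indic (Bset y) z) / P0 (indic (Bset y)))) as [Hlb _].
        assert (Hm : Rbar_le (Glb_Rbar (fun r => exists P0, credal lowP P0 /\
            r = P0 (fun z => indic H (snd z) * indic (Bset y) z) / P0 (indic (Bset y)))) (Nn / D)).
        { apply Hlb. exists P. split; [exact HP|reflexivity]. }
        pose proof (Rbar_le_trans _ _ _ Hg Hm) as Hx. simpl in Hx. unfold Sy in Hy. lra.
      - exfalso.
        assert (H0 : indic H th0 = 0) by (destruct (indic_01 H th0) as [[h _]|[_ e]]; [tauto|exact e]).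
        pose proof (Rbar_le_trans _ _ (Finite 0) Hg
          (proj1 (Glb_Rbar_correct _) 0 (ex_intro _ th0 (eq_sym H0)))) as Hx.
        simpl in Hx. unfold Sy in Hy. lra. }
    assert (HSc : countable_set Sy) by (apply (countable_pos lowP Sy Hc); intros y Hy; apply K; auto).
    pose proof (Hcong f Hfg Sy HSc (fun y Hy => proj2 (K y Hy))) as Hcg.
    assert (Ef : (fun z => indic (fun z' : Y * T => Sy (fst z')) z * f z) = f).
    { apply functional_extensionality; intro z.
      destruct (indic_01 (fun z' : Y * T => Sy (fst z')) z) as [[_ ->]|[Hn ->]]; [ring|].
      destruct (Hfv z) as [_ F]. rewrite F.
      destruct (Rlt_dec beta (Pi (fst z) (indic H))) as [r|_]; [exfalso; apply Hn; exact r|ring]. }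
    rewrite Ef in Hcg. lra.
Qed.
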